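(* In the setting of the previous statement (unitary $V$, $D=c_1I+c_2V$ with real $c_1,c_2$, unitary Arnoldi quantities $Q_k,L_k,U_k,l_{k+1,k}$, $T_k=c_1U_k+c_2L_k$ with nonsingular LU factorization, $z_k$ solving $T_kz_k=\|b\|_2e_1$, $\alpha_k=e_k^Tz_k$, and $x_k=Q_kU_kz_k$), let $\nu=c_2l_{k+1,k}$ and let $\tilde T_k$ be the $(k+1)\times k$ matrix obtained by appending the row $\nu e_k^T$ to $T_k$. Let $O_k$ be a $(k+1)\times(k+1)$ unitary matrix of the form $O_k=G_k\begin{pmatrix}O_{k-1}&0\\0&1\end{pmatrix}$ (with $O_0=1$), where $G_k$ acts as the identity on the first $k-1$ coordinates and as $\begin{pmatrix}c_k&s_k\\-\bar s_k&c_k\end{pmatrix}$ (with $c_k\ge0$ real, $c_k^2+|s_k|^2=1$) on coordinates $k,k+1$, chosen so that $O_k\tilde T_k=\begin{pmatrix}R_k\\0\end{pmatrix}$ with $R_k$ upper triangular; assume $R_k$ is nonsingular. Then the minimizer $$\tilde x_k=\arg\min_{x\in\mathrm{span}\{b,Db,\dots,D^{k-1}b\}}\|b-Dx\|_2$$ is given by $$\tilde x_k=x_k-\nu\alpha_ks_k\,Q_kU_kR_k^{-1}e_k .$$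
   Context: Unitary Arnoldi process: $q_1=b/\|b\|_2$, $q_0=0$, $v_0=0$, $u_{01}=0$; for $j=1,2,\dots$: $v_j=Vq_j$, $u_{j-1,j}=-(q_{j-1}^*v_j)/(q_{j-1}^*v_{j-1})$ for $j>1$, $l_{jj}=q_j^*v_j+u_{j-1,j}q_j^*v_{j-1}$, $\tilde q_{j+1}=v_j-l_{jj}q_j+u_{j-1,j}v_{j-1}$, $l_{j+1,j}=\|\tilde q_{j+1}\|_2$, $q_{j+1}=\tilde q_{j+1}/l_{j+1,j}$, assumed without breakdown. $Q_k=[q_1,\dots,q_k]$ (orthonormal columns); $L_k$ is $k\times k$ lower bidiagonal with diagonal $l_{jj}$ and subdiagonal $l_{j+1,j}$; $U_k$ is $k\times k$ upper bidiagonal with unit diagonal and superdiagonal $u_{j-1,j}$; $VQ_kU_k=Q_kL_k+l_{k+1,k}q_{k+1}e_k^T$. $e_j$ is the $j$-th standard unit vector. *)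

(* Defs.v *)
(* complex scalars in an abstract numClosedFieldType C
   (e.g. algC or R[i]). *)
From HB Require Import structures.
From mathcomp Require Import all_boot all_order all_algebra.
Set Implicit Arguments. Unset Strict Implicit. Unset Printing Implicit Defensive.
Import Order.TTheory GRing.Theory Num.Theory.
Local Open Scope ring_scope.

Section Defs.
Variable C : numClosedFieldType.

Definition ctr m n (A : 'M[C]_(m, n)) : 'M[C]_(n, m) := (map_mx Num.conj A)^T.

Definition cdot n (q v : 'cV[C]_n) : C := \sum_i (q i 0)^* * v i 0.

Definition norm2 n (v : 'cV[C]_n) : C := sqrtC (\sum_i `|v i 0| ^+ 2).

Definition unitary n (A : 'M[C]_n) : Prop := A *m ctr A = 1%:M.

(* standard unit column vectors e_1 and e_k (1-based) in C^k *)
Definition e1 k : 'cV[C]_k := \col_i ((i : nat) == 0%N)%:R.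
Definition elast k : 'cV[C]_k := \col_i ((i : nat) == k.-1)%:R.

(* ---------- one step of the unitary Arnoldi process ----------
   At step j (j >= 1), with qp = q_{j-1}, qc = q_j:
     v_j = V q_j, v_{j-1} = V q_{j-1}  (v_0 = 0 = V q_0 since q_0 = 0). *)
Section Step.
Variable n : nat.
Variable V : 'M[C]_n.

Definition ua_u (j : nat) (qp qc : 'cV[C]_n) : C :=
  if (j <= 1)%N then 0
  else - (cdot qp (V *m qc)) / (cdot qp (V *m qp)).

Definition ua_ldiag (j : nat) (qp qc : 'cV[C]_n) : C :=
  cdot qc (V *m qc) + ua_u j qp qc * cdot qc (V *m qp).

Definition ua_qtilde (j : nat) (qp qc : 'cV[C]_n) : 'cV[C]_n :=
  V *m qc - ua_ldiag j qp qc *: qc + ua_u j qp qc *: (V *m qp).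

Definition ua_lsub (j : nat) (qp qc : 'cV[C]_n) : C := norm2 (ua_qtilde j qp qc).

Definition ua_next (j : nat) (qp qc : 'cV[C]_n) : 'cV[C]_n :=
  (ua_lsub j qp qc)^-1 *: ua_qtilde j qp qc.

Variable b : 'cV[C]_n.

(* ua_pair j = (q_j, q_{j+1}), with q_0 = 0, q_1 = b / ||b|| *)
Fixpoint ua_pair (j : nat) : 'cV[C]_n * 'cV[C]_n :=
  match j with
  | 0 => (0, (norm2 b)^-1 *: b)
  | j'.+1 => let: (qp, qc) := ua_pair j' in (qc, ua_next j'.+1 qp qc)
  end.

Definition uq (j : nat) : 'cV[C]_n := (ua_pair j).1.
(* u_{j-1,j}, l_{jj}, l_{j+1,j} for j >= 1 *)
Definition uu (j : nat) : C := ua_u j (uq j.-1) (uq j).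
Definition ul (j : nat) : C := ua_ldiag j (uq j.-1) (uq j).
Definition ulsub (j : nat) : C := ua_lsub j (uq j.-1) (uq j).

Definition no_breakdown (k : nat) : Prop :=
  (forall j, (1 <= j <= k)%N -> ulsub j != 0) /\
  (forall j, (2 <= j <= k)%N -> cdot (uq j.-1) (V *m uq j.-1) != 0).

Definition Qk k : 'M[C]_(n, k) := \matrix_(i < n, j < k) uq j.+1 i 0.
Definition Lk k : 'M[C]_k := \matrix_(i < k, j < k)
  if (i : nat) == j then ul j.+1
  else if (i : nat) == j.+1 then ulsub j.+1 else 0.
Definition Uk k : 'M[C]_k := \matrix_(i < k, j < k)
  if (i : nat) == j then 1
  else if (j : nat) == i.+1 then uu j.+1 else 0.
End Step.

Definition upper_tri m k (A : 'M[C]_(m, k)) : Prop :=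
  forall (i : 'I_m) (j : 'I_k), (j < i)%N -> A i j = 0.
Definition lower_tri m k (A : 'M[C]_(m, k)) : Prop :=
  forall (i : 'I_m) (j : 'I_k), (i < j)%N -> A i j = 0.
Definition nonsingular_LU k (A : 'M[C]_k) : Prop :=
  exists (L U : 'M[C]_k),
    lower_tri L /\ upper_tri U /\ L \in unitmx /\ U \in unitmx /\ A = L *m U.

(* Givens rotation G_j of size (j+1): identity on coordinates 1..j-1,
   [[c, s], [-conj s, c]] on coordinates j, j+1 (1-based). *)
Definition givens j (c s : C) : 'M[C]_(j.+1) := \matrix_(a < j.+1, b < j.+1)
  if ((a : nat) == j.-1) && ((b : nat) == j.-1) then c
  else if ((a : nat) == j.-1) && ((b : nat) == j) then s
  else if ((a : nat) == j) && ((b : nat) == j.-1) then - s^*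
  else if ((a : nat) == j) && ((b : nat) == j) then c
  else ((a : nat) == b)%:R.

Definition diag_ext m (A : 'M[C]_m) : 'M[C]_(m.+1) :=
  castmx (addn1 m, addn1 m) (block_mx A 0 0 (1%:M : 'M[C]_1)).

Fixpoint Omat (c s : nat -> C) (j : nat) : 'M[C]_(j.+1) :=
  match j with
  | 0 => 1%:M
  | j'.+1 => givens j'.+1 (c j'.+1) (s j'.+1) *m diag_ext (Omat c s j')
  end.

Definition krylov n (D : 'M[C]_n) (b : 'cV[C]_n) (k : nat) (x : 'cV[C]_n) : Prop :=
  exists a : 'I_k -> C, x = \sum_(i < k) a i *: iter i (mulmx D) b.

End Defs.

(* Main.v *)
Require Import Defs.
From HB Require Import structures.
From mathcomp Require Import all_boot all_order all_algebra.
From mathcomp Require Import ring zify.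
Set Implicit Arguments. Unset Strict Implicit. Unset Printing Implicit Defensive.
Import Order.TTheory GRing.Theory Num.Theory.
Local Open Scope ring_scope.


Section Cdot.
Variable C : numClosedFieldType.

Lemma cdotDr m (x u v : 'cV[C]_m) : cdot x (u + v) = cdot x u + cdot x v.
Proof. rewrite /cdot -big_split /=; apply: eq_bigr => i _; rewrite mxE mulrDr //. Qed.
Lemma cdotZr m (x v : 'cV[C]_m) a : cdot x (a *: v) = a * cdot x v.
Proof. rewrite /cdot mulr_sumr; apply: eq_bigr => i _; rewrite mxE; ring. Qed.
Lemma cdotNr m (x v : 'cV[C]_m) : cdot x (- v) = - cdot x v.
Proof. by rewrite -scaleN1r cdotZr mulN1r. Qed.
Lemma cdotBr m (x u v : 'cV[C]_m) : cdot x (u - v) = cdot x u - cdot x v.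
Proof. by rewrite cdotDr cdotNr. Qed.
Lemma cdot0r m (x : 'cV[C]_m) : cdot x 0 = 0.
Proof. by rewrite -(scale0r 0) cdotZr mul0r. Qed.
Lemma cdotC m (x v : 'cV[C]_m) : cdot v x = (cdot x v)^*.
Proof. rewrite /cdot rmorph_sum; apply: eq_bigr => i _. rewrite rmorphM /= conjCK mulrC //. Qed.
Lemma cdotDl m (x u v : 'cV[C]_m) : cdot (u + v) x = cdot u x + cdot v x.
Proof. by rewrite cdotC cdotDr rmorphD /= -!cdotC. Qed.
Lemma cdotZl m (x v : 'cV[C]_m) a : cdot (a *: v) x = a^* * cdot v x.
Proof. by rewrite cdotC cdotZr rmorphM /= -!cdotC. Qed.
Lemma cdot0l m (x : 'cV[C]_m) : cdot 0 x = 0.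
Proof. by rewrite cdotC cdot0r rmorph0. Qed.
Lemma cdot_sumr m (x : 'cV[C]_m) I (r : seq I) (P : pred I) (F : I -> 'cV[C]_m) :
  cdot x (\sum_(i <- r | P i) F i) = \sum_(i <- r | P i) cdot x (F i).
Proof. exact: (big_morph (cdot x) (cdotDr x) (cdot0r x)). Qed.
Lemma cdot_suml m (x : 'cV[C]_m) I (r : seq I) (P : pred I) (F : I -> 'cV[C]_m) :
  cdot (\sum_(i <- r | P i) F i) x = \sum_(i <- r | P i) cdot (F i) x.
Proof. by apply: (big_morph (fun y => cdot y x)) => [u v|]; [apply: cdotDl | apply: cdot0l]. Qed.

Lemma cdot_adj m p (A : 'M[C]_(m, p)) u v : cdot (ctr A *m u) v = cdot u (A *m v).
Proof.
rewrite /cdot /ctr.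
under eq_bigr => i _ do rewrite !mxE rmorph_sum mulr_suml.
rewrite exchange_big /=; apply: eq_bigr => r _.
rewrite mxE mulr_sumr; apply: eq_bigr => i _; rewrite !mxE rmorphM /= conjCK; ring.
Qed.

Definition nsq m (v : 'cV[C]_m) : C := \sum_i `|v i 0| ^+ 2.
Lemma cdotvv m (v : 'cV[C]_m) : cdot v v = nsq v.
Proof. by apply: eq_bigr => i _; rewrite normCKC. Qed.
Lemma nsq_ge0 m (v : 'cV[C]_m) : 0 <= nsq v.
Proof. by apply: sumr_ge0 => i _; rewrite exprn_ge0. Qed.
Lemma nsq_eq0 m (v : 'cV[C]_m) : nsq v = 0 -> v = 0.
Proof.
move=> /eqP; rewrite psumr_eq0 => [/allP H|i _]; last by rewrite exprn_ge0.
apply/matrixP => i j; rewrite (ord1 j) mxE.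
have := H i (mem_index_enum _); rewrite /= sqrf_eq0 normr_eq0 => /eqP //.
Qed.
Lemma norm2E m (v : 'cV[C]_m) : norm2 v = sqrtC (nsq v). Proof. by []. Qed.
Lemma norm2_ge0 m (v : 'cV[C]_m) : 0 <= norm2 v.
Proof. by rewrite norm2E sqrtC_ge0 nsq_ge0. Qed.
Lemma norm2_eq0 m (v : 'cV[C]_m) : norm2 v = 0 -> v = 0.
Proof. by move=> /eqP; rewrite norm2E sqrtC_eq0 => /eqP/nsq_eq0. Qed.
Lemma cdot_normalize m (v : 'cV[C]_m) : norm2 v != 0 ->
  cdot ((norm2 v)^-1 *: v) ((norm2 v)^-1 *: v) = 1.
Proof.
move=> H; rewrite cdotZl cdotZr cdotvv.
have c : (norm2 v)^-1^* = (norm2 v)^-1 by rewrite geC0_conj // invr_ge0 norm2_ge0.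
rewrite c mulrA -expr2 exprVn -[nsq v](sqrtCK) -norm2E mulVf //.
by rewrite expf_neq0.
Qed.
End Cdot.


Section Arn.
Variable C : numClosedFieldType.
Variable n : nat.
Variable V : 'M[C]_n.
Variable b : 'cV[C]_n.

Local Notation q := (uq V b).
Local Notation u := (uu V b).
Local Notation l := (ul V b).
Local Notation ls := (ulsub V b).

Lemma uq0 : q 0 = 0. Proof. by []. Qed.
Lemma uq1 : q 1 = (norm2 b)^-1 *: b. Proof. by []. Qed.
Lemma ua_pairE j : ua_pair V b j = (q j, q j.+1).
Proof. elim: j => [//|j IH] /=; rewrite /uq /= IH //. Qed.
Lemma uqS j : (1 <= j)%N -> q j.+1 = (ls j)^-1 *: ua_qtilde V j (q j.-1) (q j).
Proof. case: j => // j _ /=. rewrite /uq /= ua_pairE //. Qed.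

Definition w j := q j + u j *: q j.-1.

Lemma Vw_rec j : (1 <= j)%N -> ls j != 0 ->
  V *m w j = ls j *: q j.+1 + l j *: q j.
Proof.
move=> Hj Hl; rewrite uqS // scalerA mulfV // scale1r /ua_qtilde.
rewrite /w mulmxDr -scalemxAr.
rewrite /ul /uu; set a := ua_u _ _ _ _; set c := ua_ldiag _ _ _ _.
by rewrite addrAC subrK.
Qed.

Definition inspan j (x : 'cV[C]_n) := exists a : nat -> C, x = \sum_(m < j) a m *: q m.+1.

Lemma inspan0 j : inspan j 0.
Proof. by exists (fun _ => 0); rewrite big1 // => i _; rewrite scale0r. Qed.
Lemma inspanD j x y : inspan j x -> inspan j y -> inspan j (x + y).
Proof.
move=> [a ->] [c ->]; exists (fun m => a m + c m).
by rewrite -big_split; apply: eq_bigr => i _; rewrite scalerDl.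
Qed.
Lemma inspanZ j x s : inspan j x -> inspan j (s *: x).
Proof.
move=> [a ->]; exists (fun m => s * a m).
by rewrite scaler_sumr; apply: eq_bigr => i _; rewrite scalerA.
Qed.
Lemma inspanN j x : inspan j x -> inspan j (- x).
Proof. by move=> H; rewrite -scaleN1r; apply: inspanZ. Qed.
Lemma inspanB j x y : inspan j x -> inspan j y -> inspan j (x - y).
Proof. by move=> H1 H2; apply: inspanD => //; apply: inspanN. Qed.
Lemma inspan_sum j I (r : seq I) (P : pred I) (F : I -> 'cV[C]_n) :
  (forall i, P i -> inspan j (F i)) -> inspan j (\sum_(i <- r | P i) F i).
Proof. by move=> H; apply: big_ind => //; [apply: inspan0 | apply: inspanD]. Qed.
Lemma inspan_mono j j' x : (j <= j')%N -> inspan j x -> inspan j' x.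
Proof.
move=> Hj [a ->]; exists (fun m => if (m < j)%N then a m else 0).
rewrite (big_ord_widen j' (fun m => a m *: q m.+1)) // big_mkcond /=.
by apply: eq_bigr => i _; case: ifP => //; rewrite scale0r.
Qed.
Lemma inspan_q j m : (m <= j)%N -> inspan j (q m).
Proof.
case: m => [|m] Hm; first by apply: inspan0.
exists (fun i => (i == m)%:R).
rewrite (bigD1 (Ordinal Hm)) //= eqxx scale1r big1 ?addr0 // => i /eqP Hi.
have -> : (nat_of_ord i == m) = false.
  by apply/negbTE/eqP => E; apply: Hi; apply: val_inj.
by rewrite scale0r.
Qed.

Definition ON N := forall i j, (1 <= i <= N)%N -> (1 <= j <= N)%N ->
  cdot (q i) (q j) = (i == j)%:R.

Lemma ON_span N j m x : ON N -> inspan j x -> (j < m <= N)%N -> cdot (q m) x = 0.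
Proof.
move=> HO [a ->] Hm; rewrite cdot_sumr big1 // => i _.
have := ltn_ord i => Hi; rewrite cdotZr HO; [|lia|lia].
suff -> : (m == i.+1) = false by rewrite mulr0.
by apply/negbTE/eqP; lia.
Qed.
Lemma ON_span' N j m x : ON N -> inspan j x -> (j < m <= N)%N -> cdot x (q m) = 0.
Proof. by move=> *; rewrite cdotC (ON_span (N:=N) (j:=j)) // rmorph0. Qed.

Lemma qnext j : (1 <= j)%N -> ls j != 0 ->
  q j.+1 = (ls j)^-1 *: (V *m w j - l j *: q j).
Proof. by move=> Hj Hl; rewrite Vw_rec // addrK scalerA mulVf // scale1r. Qed.

Lemma w_span j : (1 <= j)%N -> inspan j (w j).
Proof.
move=> Hj; apply: inspanD; first exact: inspan_q.
apply: inspanZ; apply: inspan_q; lia.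
Qed.

Hypothesis HV : unitary V.
Lemma VsV : ctr V *m V = 1%:M.
Proof. exact: mulmx1C. Qed.

Lemma Inv K : (forall j, (1 <= j <= K)%N -> ls j != 0) ->
  forall j, (1 <= j <= K.+1)%N -> exists c, exists s, inspan j.-1 s /\
   ctr V *m q j = c *: (ctr V *m q 1) + s.
Proof.
move=> HL; elim=> [//|j IH] Hj.
case: (posnP j) => [->|Hj0].
  by exists 1, 0; split; [apply: inspan0 | rewrite scale1r addr0].
have [c [s [Hs E]]] := IH (ltac:(lia)).
have Hl := HL j (ltac:(lia)).
rewrite qnext // -scalemxAr mulmxBr mulmxA VsV mul1mx -scalemxAr E.
exists (- ((ls j)^-1 * l j * c)), ((ls j)^-1 *: (w j - l j *: s)); split.
  apply: inspanZ; apply: inspanB; first exact: w_span.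
  by apply: inspanZ; apply: (inspan_mono _ Hs); lia.
rewrite scalerDr !scalerBr scalerDr !scalerA scaleNr.
rewrite scalerN !scalerDr !scalerA opprD ?mulrA addrC -addrA; congr (_ + _); by rewrite addrC.
Qed.

Lemma cdot_w_span j x : ON j -> (2 <= j)%N -> inspan j.-2 x -> cdot x (w j) = 0.
Proof.
move=> HO Hj Hx; rewrite /w cdotDr cdotZr.
rewrite (ON_span' (N:=j) (j:=j.-2)) //; last lia.
rewrite (ON_span' (N:=j) (j:=j.-2)) //; last lia.
by rewrite mulr0 addr0.
Qed.

Lemma key K j i : (forall j, (1 <= j <= K)%N -> ls j != 0) ->
  (forall j, (2 <= j <= K)%N -> cdot (q j.-1) (V *m q j.-1) != 0) ->
  (1 <= j <= K)%N -> ON j -> (1 <= i <= j)%N ->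
  cdot (q i) (V *m w j) = (i == j)%:R * l j.
Proof.
move=> HL HB Hj HO Hi.
case: (eqVneq i j) => [->|Hij].
  by rewrite mul1r /w mulmxDr -scalemxAr cdotDr cdotZr /ul /ua_ldiag.
rewrite mul0r.
have Hu : (2 <= j)%N -> cdot (q j.-1) (V *m w j) = 0.
  move=> Hj2; rewrite /w mulmxDr -scalemxAr cdotDr cdotZr /uu /ua_u.
  have -> : (j <= 1)%N = false by lia.
  have HB' := HB j (ltac:(lia)).
  by rewrite !mulNr divfK // subrr.
case: (eqVneq i j.-1) => [->|Hij1]; first by apply: Hu; lia.
have Hj3 : (3 <= j)%N by lia.
have [c [s [Hs E]]] := Inv HL (j:=i) (ltac:(lia)).
have [c' [s' [Hs' E']]] := Inv HL (j:=j.-1) (ltac:(lia)).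
rewrite -cdot_adj E cdotDl cdotZl cdot_adj.
rewrite (cdot_w_span HO) ?mulr0 ?addr0; last by apply: (inspan_mono _ Hs); lia.
suff -> : cdot (q 1) (V *m w j) = 0 by rewrite mulr0.
have := Hu (ltac:(lia)); rewrite -cdot_adj E' cdotDl cdotZl cdot_adj.
rewrite (cdot_w_span HO) ?addr0 //; try lia.
move/eqP; rewrite mulf_eq0 => /orP [|/eqP //].
rewrite conjC_eq0 => /eqP c0.
have := HB j.-1.+1 (ltac:(lia)); rewrite /= -cdot_adj E' c0 scale0r add0r.
rewrite (ON_span' (N:=j) (j:=j.-2)) ?eqxx //. all: try lia.
Qed.

Lemma ON_all K : b != 0 -> (forall j, (1 <= j <= K)%N -> ls j != 0) ->
  (forall j, (2 <= j <= K)%N -> cdot (q j.-1) (V *m q j.-1) != 0) -> ON K.+1.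
Proof.
move=> Hb HL HB.
have H1 : ON 1.
  move=> i j Hi Hj; have -> : i = 1%N by lia. have -> : j = 1%N by lia.
  rewrite uq1 cdot_normalize //; apply/eqP => /norm2_eq0 E; by rewrite E eqxx in Hb.
suff : forall j, (1 <= j <= K.+1)%N -> ON j by apply; lia.
elim=> [//|j IH] Hj; case: (posnP j) => [->//|Hj0].
have HO := IH (ltac:(lia)).
have Hl := HL j (ltac:(lia)).
have Hq : forall i, (1 <= i <= j)%N -> cdot (q i) (q j.+1) = 0.
  move=> i Hi; rewrite qnext // cdotZr cdotBr cdotZr (key HL HB) //; last lia.
  rewrite HO; [|lia|lia]. by rewrite [_ * l j]mulrC subrr mulr0.
have Hn : cdot (q j.+1) (q j.+1) = 1.
  by rewrite uqS //; apply: cdot_normalize.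
move=> i i' Hi Hi'.
case: (eqVneq i j.+1) => [->|Hi1]; case: (eqVneq i' j.+1) => [->|Hi1'].
- by rewrite Hn.
- rewrite cdotC Hq; last lia. by rewrite rmorph0.
- rewrite Hq; last lia. by rewrite (negbTE Hi1).
- by apply: HO; lia.
Qed.

Lemma Vq_span K : (forall j, (1 <= j <= K)%N -> ls j != 0) ->
  forall j, (j <= K)%N -> inspan j.+1 (V *m q j).
Proof.
move=> HL; elim=> [|j IH] Hj; first by rewrite uq0 mulmx0; apply: inspan0.
have Hl := HL j.+1 (ltac:(lia)).
have -> : V *m q j.+1 = V *m w j.+1 - u j.+1 *: (V *m q j).
  by rewrite /w mulmxDr -scalemxAr /= addrK.
rewrite Vw_rec //; apply: inspanB; first apply: inspanD.
- by apply: inspanZ; apply: inspan_q.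
- by apply: inspanZ; apply: inspan_q; lia.
- by apply: inspanZ; apply: (inspan_mono _ (IH _)); lia.
Qed.

Variables c1 c2 : C.
Local Notation D := (c1%:M + c2 *: V).

Lemma D_span K j x : (forall j, (1 <= j <= K)%N -> ls j != 0) -> (j <= K)%N ->
  inspan j x -> inspan j.+1 (D *m x).
Proof.
move=> HL Hj [a ->]; rewrite mulmx_sumr; apply: inspan_sum => m _; have Hm := ltn_ord m.
rewrite -scalemxAr; apply: inspanZ; rewrite mulmxDl mul_scalar_mx -scalemxAl.
apply: inspanD; apply: inspanZ; first by apply: inspan_q; lia.
have Hm1 : (m.+1 <= K)%N by lia.
by apply: (inspan_mono _ (Vq_span HL Hm1)); lia.
Qed.

Lemma iterD_span K i : b != 0 -> (forall j, (1 <= j <= K)%N -> ls j != 0) -> (i <= K)%N ->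
  inspan i.+1 (iter i (mulmx D) b).
Proof.
move=> Hb HL; elim: i => [|i IH] Hi /=.
  have -> : b = norm2 b *: q 1.
    rewrite uq1 scalerA mulfV ?scale1r //.
    by apply/eqP => /norm2_eq0 E; rewrite E eqxx in Hb.
  by apply: inspanZ; apply: inspan_q.
by apply: (D_span HL); [lia | apply: IH; lia].
Qed.

Definition kry j (x : 'cV[C]_n) :=
  exists a : nat -> C, x = \sum_(i < j) a i *: iter i (mulmx D) b.

Lemma kry_span K j x : b != 0 -> (forall j, (1 <= j <= K)%N -> ls j != 0) -> (j <= K.+1)%N ->
  kry j x -> inspan j x.
Proof.
move=> Hb HL Hj [a ->]; apply: inspan_sum => i _; have Hi := ltn_ord i; apply: inspanZ.
by apply: (inspan_mono _ (iterD_span Hb HL _)); lia.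
Qed.

Lemma kry0 j : kry j 0.
Proof. by exists (fun _ => 0); rewrite big1 // => i _; rewrite scale0r. Qed.
Lemma kryD j x y : kry j x -> kry j y -> kry j (x + y).
Proof.
move=> [a ->] [c ->]; exists (fun m => a m + c m).
by rewrite -big_split; apply: eq_bigr => i _; rewrite scalerDl.
Qed.
Lemma kryZ j x s : kry j x -> kry j (s *: x).
Proof.
move=> [a ->]; exists (fun m => s * a m).
by rewrite scaler_sumr; apply: eq_bigr => i _; rewrite scalerA.
Qed.
Lemma kryB j x y : kry j x -> kry j y -> kry j (x - y).
Proof. by move=> H1 H2; apply: kryD => //; rewrite -scaleN1r; apply: kryZ. Qed.
Lemma kry_mono j j' x : (j <= j')%N -> kry j x -> kry j' x.
Proof.
move=> Hj [a ->]; exists (fun m => if (m < j)%N then a m else 0).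
rewrite (big_ord_widen j' (fun m => a m *: iter m (mulmx D) b)) // big_mkcond /=.
by apply: eq_bigr => i _; case: ifP => //; rewrite scale0r.
Qed.
Lemma kry_D j x : kry j x -> kry j.+1 (D *m x).
Proof.
move=> [a ->]; exists (fun m => if m is m'.+1 then a m' else 0).
rewrite big_ord_recl /= scale0r add0r mulmx_sumr; apply: eq_bigr => i _.
by rewrite -scalemxAr.
Qed.
Lemma kry_V j x : c2 != 0 -> kry j x -> kry j.+1 (V *m x).
Proof.
move=> Hc Hx.
have -> : V *m x = c2^-1 *: (D *m x - c1 *: x).
  by rewrite mulmxDl mul_scalar_mx -scalemxAl addrC addKr scalerA mulVf ?scale1r.
apply: kryZ; apply: kryB; first exact: kry_D.
by apply: kryZ; apply: (kry_mono _ Hx).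
Qed.

Lemma kry_q K : b != 0 -> c2 != 0 -> (forall j, (1 <= j <= K)%N -> ls j != 0) ->
  forall j, (j <= K.+1)%N -> kry j (q j).
Proof.
move=> Hb Hc HL j; elim: j {-2}j (leqnn j) => [|N IH] j Hj HjK.
  by move: Hj; rewrite leqn0 => /eqP ->; exact: kry0.
case: (leqP j N) => [HjN|HjN]; first exact: IH.
have -> : j = N.+1 by lia.
case: (posnP N) => [->|HN0].
  rewrite uq1; apply: kryZ; exists (fun _ => 1).
  by rewrite big_ord1 scale1r.
have Hl := HL N (ltac:(lia)).
have Hq := IH N (leqnn N) (ltac:(lia)).
have Hq' : kry N (q N.-1) by apply: (kry_mono _ (IH N.-1 _ _)); lia.
rewrite qnext //; apply: kryZ; apply: kryB; last first.
  by apply: kryZ; apply: (kry_mono _ Hq).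
apply: kry_V => //; apply: kryD => //.
by apply: kryZ.
Qed.

Lemma span_kry K j x : b != 0 -> c2 != 0 -> (forall j, (1 <= j <= K)%N -> ls j != 0) ->
  (j <= K.+1)%N -> inspan j x -> kry j x.
Proof.
move=> Hb Hc HL Hj [a ->]; elim: j Hj => [|j IH] Hj; first by rewrite big_ord0; apply: kry0.
rewrite big_ord_recr /=; apply: kryD.
  by apply: (kry_mono _ (IH _)); lia.
by apply: kryZ; apply: (kry_q Hb Hc HL).
Qed.
End Arn.


Section Mx.
Variable C : numClosedFieldType.
Variable n : nat.
Variable V : 'M[C]_n.
Variable b : 'cV[C]_n.

Local Notation q := (uq V b).
Local Notation u := (uu V b).
Local Notation l := (ul V b).
Local Notation ls := (ulsub V b).

Lemma sum_delta k p (F : nat -> 'cV[C]_n) :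
  \sum_(i < k) ((i : nat) == p)%:R *: F i = (p < k)%:R *: F p.
Proof.
elim: k => [|k IH]; first by rewrite big_ord0 scale0r.
rewrite big_ord_recr /= IH.
case: (ltngtP p k) => [H|H|->]; rewrite ?scale0r ?addr0 ?add0r ?ltnSn ?ltnn ?eqxx ?scale0r ?add0r //.
- by have -> : (p < k.+1)%N by lia.
- by rewrite (_ : (p < k.+1)%N = false) ?scale0r //; lia.
Qed.

Lemma Qk_mul k (a : 'cV[C]_k) : Qk V b k *m a = \sum_(i < k) a i 0 *: q i.+1.
Proof.
apply/matrixP => r c; rewrite (ord1 c) !mxE summxE; apply: eq_bigr => i _.
by rewrite !mxE mulrC.
Qed.

Lemma QM_mul k (M : 'M[C]_k) (a : 'cV[C]_k) :
  Qk V b k *m (M *m a) = \sum_(j < k) a j 0 *: (\sum_(i < k) M i j *: q i.+1).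
Proof.
rewrite Qk_mul.
under eq_bigr => i _ do rewrite mxE scaler_suml.
rewrite exchange_big /=; apply: eq_bigr => j _.
by rewrite scaler_sumr; apply: eq_bigr => i _; rewrite scalerA mulrC.
Qed.

Lemma Uk_E k (i j : 'I_k) : Uk V b k i j =
  ((i : nat) == j)%:R + ((j : nat) == i.+1)%:R * u j.+1.
Proof.
rewrite mxE; case: eqP => E; case: eqP => E' /=; try lia;
  by rewrite ?mul0r ?mul1r ?addr0 ?add0r.
Qed.

Lemma Lk_E k (i j : 'I_k) : Lk V b k i j =
  ((i : nat) == j)%:R * l j.+1 + ((i : nat) == j.+1)%:R * ls j.+1.
Proof.
rewrite mxE; case: eqP => E; case: eqP => E' /=; try lia;
  by rewrite ?mul0r ?mul1r ?addr0 ?add0r.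
Qed.

Lemma Ucol k (j : 'I_k) : \sum_(i < k) Uk V b k i j *: q i.+1 = q j.+1 + u j.+1 *: q j.
Proof.
under eq_bigr => i _ do rewrite Uk_E scalerDl.
rewrite big_split /= (sum_delta _ _ (fun i => q i.+1)) ltn_ord scale1r; congr (_ + _).
case: j => [[|j] Hj] /=.
  by rewrite big1 ?uq0 ?scaler0 // => i _; rewrite mul0r scale0r.
under eq_bigr => i _ do rewrite eqSS eq_sym -scalerA.
by rewrite (sum_delta _ _ (fun i => u j.+2 *: q i.+1)) (_ : (j < k)%N) ?scale1r //; lia.
Qed.

Lemma Lcol k (j : 'I_k) : \sum_(i < k) Lk V b k i j *: q i.+1 =
  l j.+1 *: q j.+1 + (j.+1 < k)%N%:R *: (ls j.+1 *: q j.+2).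
Proof.
under eq_bigr => i _ do rewrite Lk_E scalerDl -!scalerA.
rewrite big_split /= (sum_delta _ _ (fun i => l j.+1 *: q i.+1)) ltn_ord scale1r; congr (_ + _).
by rewrite (sum_delta _ _ (fun i => ls j.+1 *: q i.+1)).
Qed.

Lemma VQU k (a : 'cV[C]_k.+1) : (forall j, (1 <= j <= k.+1)%N -> ls j != 0) ->
  V *m (Qk V b k.+1 *m (Uk V b k.+1 *m a)) =
  Qk V b k.+1 *m (Lk V b k.+1 *m a) + (ls k.+1 * a ord_max 0) *: q k.+2.
Proof.
move=> HL; rewrite !QM_mul mulmx_sumr.
under eq_bigr => j _.
  have Hj := ltn_ord j.
  rewrite Ucol -scalemxAr (_ : q j.+1 + u j.+1 *: q j = w V b j.+1) //.
  rewrite Vw_rec; [|lia|by apply: HL; lia].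
  over.
under [X in _ = X + _]eq_bigr => j _ do rewrite Lcol.
rewrite !big_ord_recr -addrA; congr (_ + _).
  apply: eq_bigr => j _; have Hj := ltn_ord j.
  have -> : ((widen_ord (leqnSn k) j).+1 < k.+1)%N by rewrite /=; lia.
  by rewrite scale1r [in RHS]addrC.
change (nat_of_ord (ord_max : 'I_k.+1)) with k.
rewrite ltnn scale0r addr0 scalerDr addrC scalerA mulrC scalerA [a _ _ * _]mulrC //.
Qed.

Lemma sum_delta_ord k (i : 'I_k) (F : 'I_k -> C) :
  \sum_(j < k) ((j : nat) == i)%:R * F j = F i.
Proof.
rewrite (bigD1 i) //= eqxx mul1r big1 ?addr0 // => j Hj.
by rewrite (_ : (j : nat) == i = false) ?mul0r //; apply/negbTE.
Qed.

Lemma nsq_Q N m (v : 'cV[C]_m) : ON V b N -> (m <= N)%N -> nsq (Qk V b m *m v) = nsq v.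
Proof.
move=> HO Hm; rewrite -!cdotvv Qk_mul cdot_suml [RHS]/cdot; apply: eq_bigr => i _.
rewrite cdotZl cdot_sumr; congr (_ * _).
under eq_bigr => j _.
  have Hj := ltn_ord j; have Hi := ltn_ord i.
  rewrite cdotZr HO; [|lia|lia].
  rewrite eqSS eq_sym mulrC.
  over.
by rewrite sum_delta_ord.
Qed.
End Mx.


Section Giv.
Variable C : numClosedFieldType.

Definition top m (v : 'cV[C]_m.+1) : 'cV[C]_m := \col_i v (widen_ord (leqnSn m) i) 0.

Lemma nsq_split m (v : 'cV[C]_m.+1) : nsq v = nsq (top v) + `|v ord_max 0| ^+ 2.
Proof. by rewrite /nsq big_ord_recr /=; congr (_ + _); apply: eq_bigr => i _; rewrite mxE. Qed.

Lemma diag_ext_E m (M : 'M[C]_m) (i a : 'I_m) :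
  [/\ diag_ext M (widen_ord (leqnSn m) i) (widen_ord (leqnSn m) a) = M i a,
      diag_ext M (widen_ord (leqnSn m) i) ord_max = 0 &
      diag_ext M ord_max (widen_ord (leqnSn m) a) = 0].
Proof.
have Hw : forall x : 'I_m, cast_ord (esym (addn1 m)) (widen_ord (leqnSn m) x) = lshift 1 x.
  by move=> x; apply: val_inj.
have Hm : cast_ord (esym (addn1 m)) ord_max = rshift m (ord0 : 'I_1).
  by apply: val_inj => /=; rewrite addn0.
rewrite /diag_ext !castmxE /= !Hw Hm.
by rewrite block_mxEul block_mxEur block_mxEdl !mxE.
Qed.

Lemma diag_ext_max m (M : 'M[C]_m) : diag_ext M ord_max ord_max = 1.
Proof.
have Hm : cast_ord (esym (addn1 m)) ord_max = rshift m (ord0 : 'I_1).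
  by apply: val_inj => /=; rewrite addn0.
by rewrite /diag_ext !castmxE /= Hm block_mxEdr mxE.
Qed.

Lemma diag_ext_mul m (M : 'M[C]_m) (v : 'cV[C]_m.+1) :
  top (diag_ext M *m v) = M *m top v /\ (diag_ext M *m v) ord_max 0 = v ord_max 0.
Proof.
split.
  apply/matrixP => i j; rewrite (ord1 j) !mxE big_ord_recr /=.
  have [_ -> _] := diag_ext_E M i i; rewrite mul0r addr0.
  by apply: eq_bigr => a _; have [-> _ _] := diag_ext_E M i a; rewrite mxE.
rewrite !mxE big_ord_recr /= diag_ext_max mul1r big1 ?add0r // => a _.
by have [_ _ ->] := diag_ext_E M a a; rewrite mul0r.
Qed.

Lemma nsq_diag_ext m (M : 'M[C]_m) (v : 'cV[C]_m.+1) :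
  (forall w, nsq (M *m w) = nsq w) -> nsq (diag_ext M *m v) = nsq v.
Proof.
move=> HM; have [H1 H2] := diag_ext_mul M v.
by rewrite nsq_split H1 H2 HM -nsq_split.
Qed.

Lemma givens_E j (c s : C) (r a : 'I_j.+2) : givens j.+1 c s r a =
  if (r : nat) == j then ((a : nat) == j)%:R * c + ((a : nat) == j.+1)%:R * s
  else if (r : nat) == j.+1 then ((a : nat) == j)%:R * (- s^*) + ((a : nat) == j.+1)%:R * c
  else ((r : nat) == a)%:R.
Proof.
have Hr := ltn_ord r; have Ha := ltn_ord a.
rewrite mxE /=.
case: (eqVneq (r : nat) j) => Er; case: (eqVneq (a : nat) j) => Ea;
  case: (eqVneq (a : nat) j.+1) => Ea1; case: (eqVneq (r : nat) j.+1) => Er1 /=;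
  rewrite ?mul1r ?mul0r ?addr0 ?add0r //; try lia.
all: case: eqP => // *; lia.
Qed.

Lemma sum_delta_ordC k (i : 'I_k) (F : 'I_k -> C) :
  \sum_(j < k) ((j : nat) == i)%:R * F j = F i.
Proof.
rewrite (bigD1 i) //= eqxx mul1r big1 ?addr0 // => j Hj.
by rewrite (_ : (j : nat) == i = false) ?mul0r //; apply/negbTE.
Qed.

Lemma givens_row j (c s : C) (v : 'cV[C]_j.+2) (r : 'I_j.+2) :
  let P := widen_ord (leqnSn j.+1) (ord_max : 'I_j.+1) in
  let Q := (ord_max : 'I_j.+2) in
  (givens j.+1 c s *m v) r 0 =
  if (r : nat) == j then c * v P 0 + s * v Q 0
  else if (r : nat) == j.+1 then - s^* * v P 0 + c * v Q 0
  else v r 0.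
Proof.
move=> P Q; rewrite mxE.
under eq_bigr => a _ do rewrite givens_E.
case: ifP => _.
  under eq_bigr => a _ do rewrite mulrDl -!mulrA.
  rewrite big_split /= (sum_delta_ordC P (fun a => c * v a 0)).
  by rewrite (sum_delta_ordC Q (fun a => s * v a 0)).
case: ifP => _.
  under eq_bigr => a _ do rewrite mulrDl -!mulrA.
  rewrite big_split /= (sum_delta_ordC P (fun a => - s^* * v a 0)).
  by rewrite (sum_delta_ordC Q (fun a => c * v a 0)).
under eq_bigr => a _ do rewrite eq_sym.
by rewrite (sum_delta_ordC r (fun a => v a 0)).
Qed.

Lemma rot_norm (c s x y : C) : 0 <= c -> c ^+ 2 + `|s| ^+ 2 = 1 ->
  `|c * x + s * y| ^+ 2 + `|- s^* * x + c * y| ^+ 2 = `|x| ^+ 2 + `|y| ^+ 2.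
Proof.
move=> Hc H; rewrite normCK in H; rewrite !normCK.
rewrite !rmorphD !rmorphM /= !rmorphN /= conjCK geC0_conj //.
have -> : (c * x + s * y) * (c * x^* + s^* * y^* ) +
  (- s^* * x + c * y) * (- s * x^* + c * y^* ) =
  (c ^+ 2 + s * s^* ) * (x * x^* + y * y^* ) by ring.
by rewrite H mul1r.
Qed.


Lemma nsq_givens j (c s : C) (v : 'cV[C]_j.+2) : 0 <= c -> c ^+ 2 + `|s| ^+ 2 = 1 ->
  nsq (givens j.+1 c s *m v) = nsq v.
Proof.
move=> Hc H; rewrite /nsq !big_ord_recr /= !givens_row.
have E1 : (nat_of_ord (widen_ord (leqnSn j.+1) (ord_max : 'I_j.+1)) == j) by [].
have E2 : (nat_of_ord (ord_max : 'I_j.+2) == j) = false by apply/negbTE; rewrite /=; lia.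
have E3 : nat_of_ord (ord_max : 'I_j.+2) == j.+1 by [].
rewrite E1 E2 E3 -!addrA rot_norm //; congr (_ + _).
apply: eq_bigr => i _; rewrite givens_row.
have Hi := ltn_ord i.
have E4 : nat_of_ord (widen_ord (leqnSn j.+1) (widen_ord (leqnSn j) i)) == j = false.
  by apply/negbTE; rewrite /=; lia.
have E5 : nat_of_ord (widen_ord (leqnSn j.+1) (widen_ord (leqnSn j) i)) == j.+1 = false.
  by apply/negbTE; rewrite /=; lia.
by rewrite E4 E5.
Qed.

Lemma nsq_Omat (cg sg : nat -> C) k (v : 'cV[C]_k.+1) :
  (forall j, (1 <= j <= k)%N -> 0 <= cg j /\ cg j ^+ 2 + `|sg j| ^+ 2 = 1) ->
  nsq (Omat cg sg k *m v) = nsq v.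
Proof.
elim: k v => [|k IH] v H; first by rewrite /= mul1mx.
rewrite /= -mulmxA.
have [H1 H2] := H k.+1 (ltac:(lia)).
rewrite nsq_givens //; apply: nsq_diag_ext => w; apply: IH => j Hj; apply: H; lia.
Qed.

Lemma col_ext m (x y : 'cV[C]_m.+1) : top x = top y -> x ord_max 0 = y ord_max 0 -> x = y.
Proof.
move=> Ht Hm; apply/matrixP => i j; rewrite (ord1 j).
case: (ltnP i m) => Hi.
  have := congr1 (fun M : 'cV[C]_m => M (Ordinal Hi) 0) Ht; rewrite !mxE.
  by have -> : widen_ord (leqnSn m) (Ordinal Hi) = i by apply: val_inj.
have -> : i = ord_max by apply: val_inj => /=; have := ltn_ord i; lia.
by [].
Qed.

Lemma Omat_last (cg sg : nat -> C) k (i : 'I_k.+1) :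
  (Omat cg sg k.+1 *m elast C k.+2) (widen_ord (leqnSn k.+1) i) 0 = ((i : nat) == k)%:R * sg k.+1.
Proof.
rewrite /= -mulmxA.
have -> : diag_ext (Omat cg sg k) *m elast C k.+2 = elast C k.+2.
  have [H1 H2] := diag_ext_mul (Omat cg sg k) (elast C k.+2).
  apply: col_ext; last by rewrite H2.
  have Ht : top (elast C k.+2) = 0.
    apply/matrixP => a j; rewrite !mxE.
    by rewrite (_ : (widen_ord (leqnSn k.+1) a : nat) == k.+1 = false) //=; apply/negbTE; have := ltn_ord a; lia.
  by rewrite H1 Ht mulmx0.
rewrite givens_row !mxE.
have Hi := ltn_ord i.
have E1 : nat_of_ord (widen_ord (leqnSn k.+1) (ord_max : 'I_k.+1)) == k.+1 = false by apply/negbTE; rewrite /=; lia.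
have E3 : nat_of_ord (ord_max : 'I_k.+2) == k.+1 by [].
rewrite E1 E3 mulr0 add0r mulr1.
case: (eqVneq (i : nat) k) => [E|E]; first by rewrite mul1r.
have E5 : nat_of_ord (widen_ord (leqnSn k.+1) i) == k.+1 = false by apply/negbTE; rewrite /=; lia.
by rewrite E5 mul0r.
Qed.
End Giv.


Section Fin.
Variable C : numClosedFieldType.

Lemma castcol k p (A : 'M[C]_(k, p)) (B : 'M[C]_(1, p)) (a : 'cV[C]_p) :
  top (castmx (addn1 k, erefl p) (col_mx A B) *m a) = A *m a /\
  (castmx (addn1 k, erefl p) (col_mx A B) *m a) ord_max 0 = (B *m a) 0 0.
Proof.
have Hw : forall x : 'I_k, cast_ord (esym (addn1 k)) (widen_ord (leqnSn k) x) = lshift 1 x.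
  by move=> x; apply: val_inj.
have Hm : cast_ord (esym (addn1 k)) ord_max = rshift k (ord0 : 'I_1).
  by apply: val_inj => /=; rewrite addn0.
split.
  apply/matrixP => i j; rewrite (ord1 j) !mxE; apply: eq_bigr => r _.
  by rewrite castmxE /= Hw cast_ord_id col_mxEu.
rewrite !mxE; apply: eq_bigr => r _.
by rewrite castmxE /= Hm cast_ord_id col_mxEd.
Qed.

Lemma topE m (v : 'cV[C]_m.+1) i j : top v i j = v (widen_ord (leqnSn m) i) 0.
Proof. by rewrite mxE. Qed.

Lemma topB m (x y : 'cV[C]_m.+1) : top (x - y) = top x - top y.
Proof. by apply/matrixP => i j; rewrite !mxE. Qed.
Lemma topD m (x y : 'cV[C]_m.+1) : top (x + y) = top x + top y.
Proof. by apply/matrixP => i j; rewrite !mxE. Qed.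
Lemma topZ m (x : 'cV[C]_m.+1) s : top (s *: x) = s *: top x.
Proof. by apply/matrixP => i j; rewrite !mxE. Qed.

Lemma krylov_kry n (D : 'M[C]_n) b k y : krylov D b k y <->
  exists a : nat -> C, y = \sum_(i < k) a i *: iter i (mulmx D) b.
Proof.
split => [[a ->]|[a ->]].
  case: k a => [|k] a; first by exists (fun _ => 0); rewrite !big_ord0.
  exists (fun m => a (inord m)); apply: eq_bigr => i _; by rewrite inord_val.
by exists (fun i => a i).
Qed.

Lemma Uk_unit n (V : 'M[C]_n) b k : Uk V b k \in unitmx.
Proof.
rewrite unitmxE -det_tr det_trig.
  by rewrite big1 ?unitr1 // => i _; rewrite !mxE eqxx.
apply/is_trig_mxP => i j Hij; rewrite !mxE.
rewrite (_ : (j : nat) == i = false); last by apply/negbTE; lia.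
by rewrite (_ : (i : nat) == j.+1 = false) //; apply/negbTE; lia.
Qed.

Lemma Qk_e1 n (V : 'M[C]_n) b k : Qk V b k.+1 *m e1 C k.+1 = uq V b 1.
Proof.
rewrite Qk_mul.
under eq_bigr => i _ do rewrite mxE.
by rewrite (sum_delta _ _ (fun i => uq V b i.+1)) scale1r.
Qed.
End Fin.

Theorem mainTheorem6 (C : numClosedFieldType) (n k : nat)
  (V : 'M[C]_n) (b : 'cV[C]_n) (c1 c2 : C)
  (cg sg : nat -> C) (z : 'cV[C]_k) (R : 'M[C]_k) :
  unitary V ->
  c1 \is Num.real -> c2 \is Num.real ->
  b != 0 ->
  (0 < k)%N ->
  no_breakdown V b k ->
  let D := c1%:M + c2 *: V in
  let Q := Qk V b k in
  let L := Lk V b k in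
  let U := Uk V b k in
  let T := c1 *: U + c2 *: L in
  nonsingular_LU T ->
  T *m z = norm2 b *: e1 C k ->
  let alpha := ((elast C k)^T *m z) 0 0 in
  let x := Q *m U *m z in
  let nu := c2 * ulsub V b k in
  let Tt : 'M[C]_(k + 1, k) := col_mx T (nu *: (elast C k)^T) in
  (forall j, (1 <= j <= k)%N -> 0 <= cg j /\ cg j ^+ 2 + `|sg j| ^+ 2 = 1) ->
  Omat cg sg k *m castmx (addn1 k, erefl k) Tt
    = castmx (addn1 k, erefl k) (col_mx R (0 : 'M[C]_(1, k))) ->
  upper_tri R ->
  R \in unitmx ->
  let xt := x - (nu * alpha * sg k) *: (Q *m U *m invmx R *m elast C k) in
  krylov D b k xt /\
  (forall y, krylov D b k y -> norm2 (b - D *m xt) <= norm2 (b - D *m y)) /\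
  (forall y, krylov D b k y -> norm2 (b - D *m y) <= norm2 (b - D *m xt) -> y = xt).
Proof.
move=> HV Hc1 Hc2 Hb Hk [HL HB] D Q L U T _ Hz alpha x nu Tt Hcs HO HRt HRu xt.
destruct k as [|k]; first by [].
have HON : ON V b k.+2 := ON_all HV Hb HL HB.
set beta := norm2 b.
have Hbeta : beta != 0 by apply/eqP => /norm2_eq0 E; rewrite E eqxx in Hb.
set Tt' := castmx (addn1 k.+1, erefl) Tt.
have F1 : forall a : 'cV_k.+1, D *m (Q *m (U *m a)) = Qk V b k.+2 *m (Tt' *m a).
  move=> a.
  have [Ht Hl] := castcol T (nu *: (elast C k.+1)^T) a.
  have E : forall i, (Tt' *m a) (widen_ord (leqnSn k.+1) i) 0 = (T *m a) i 0.
    by move=> i; rewrite -Ht topE.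
  rewrite [RHS]Qk_mul big_ord_recr.
  under eq_bigr => i _ do rewrite E.
  have -> : \sum_(i < k.+1) (T *m a) i 0 *: uq V b (widen_ord (leqnSn k.+1) i).+1
    = Q *m (T *m a) by rewrite Qk_mul.
  have -> : (Tt' *m a) ord_max 0 = nu * a ord_max 0.
    rewrite Hl -scalemxAl mxE; congr (_ * _); rewrite mxE.
    under eq_bigr => j _ do rewrite !mxE.
    exact: (sum_delta_ordC ord_max (fun j => a j 0)).
  rewrite /D mulmxDl mul_scalar_mx -scalemxAl VQU //.
  rewrite /T mulmxDl -!scalemxAl mulmxDr -!scalemxAr scalerDr addrA scalerA.
  by rewrite /nu -mulrA.
set e1' := e1 C k.+2.
have Hbq : b = Qk V b k.+2 *m (beta *: e1').
  by rewrite -scalemxAr Qk_e1 uq1 scalerA mulfV // scale1r.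
set O := Omat cg sg k.+1.
set g := O *m (beta *: e1').
have Fres : forall a, nsq (b - D *m (Q *m (U *m a))) = nsq (top g - R *m a) + `|g ord_max 0| ^+ 2.
  move=> a; rewrite F1 [X in X - _]Hbq -mulmxBr (nsq_Q _ HON (leqnn _)).
  rewrite -(nsq_Omat _ Hcs) mulmxBr mulmxA HO nsq_split topB.
  have [Ht Hl] := castcol R 0 a.
  rewrite Ht [(g - _) _ _]mxE.
  move: Hl; set X := castmx _ _ *m a => Hl.
  have Hm : (- X) ord_max 0 = 0 by rewrite mxE Hl mul0mx mxE oppr0.
  by rewrite Hm addr0.
set coef := nu * alpha * sg k.+1.
set astar := z - coef *: (invmx R *m elast C k.+1).
have Hxt : xt = Q *m (U *m astar).
  by rewrite /xt /x /astar !mulmxBr -!scalemxAr !mulmxA.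
have HTz : Tt' *m z = beta *: e1' + (nu * alpha) *: elast C k.+2.
  have [Ht Hl] := castcol T (nu *: (elast C k.+1)^T) z.
  apply: col_ext.
    rewrite Ht Hz topD !topZ; apply/matrixP => i j; rewrite (ord1 j) !mxE.
    by rewrite (_ : (widen_ord (leqnSn k.+1) i : nat) == k.+1 = false) ?mulr0 ?addr0 //;
      apply/negbTE; have := ltn_ord i; rewrite /=; lia.
  rewrite Hl -scalemxAl [in LHS]mxE !mxE eqxx mulr1.
  have E0 : (nat_of_ord (ord_max : 'I_k.+2) == 0%N) = false by [].
  by rewrite E0 mulr0 add0r /alpha mxE.
have HOl : top (Omat cg sg k.+1 *m elast C k.+2) = sg k.+1 *: elast C k.+1.
  apply/matrixP => i j; rewrite (ord1 j) topE Omat_last !mxE mulrC.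
  by rewrite (_ : k.+1.-1 = k).
have HRa : R *m astar = top g.
  have HRz : R *m z = top g + coef *: elast C k.+1.
    have [Ht _] := castcol R 0 z.
    rewrite -Ht -HO -mulmxA -/Tt' HTz mulmxDr -!scalemxAr !topD !topZ HOl /g -scalemxAr topZ scalerA /coef.
    done.
  rewrite /astar mulmxBr HRz -scalemxAr mulmxA mulmxV // mul1mx addrK //.
have Hspan : forall y, krylov D b k.+1 y -> exists a : 'cV_k.+1, y = Q *m (U *m a).
  move=> y /krylov_kry [a' Ha].
  have Hy : kry V b c1 c2 k.+1 y by exists a'.
  have [a'' Ha''] := kry_span Hb HL (leqnSn _) Hy.
  exists (invmx U *m \col_i a'' i).
  rewrite mulKVmx ?Uk_unit // Qk_mul Ha''; apply: eq_bigr => i _; rewrite mxE.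
  done.
have nsq0 : nsq (0 : 'cV[C]_n) = 0.
  by rewrite /nsq big1 // => i _; rewrite mxE normr0 expr0n.
have Hxr : nsq (b - D *m xt) = `|g ord_max 0| ^+ 2.
  by rewrite Hxt Fres HRa subrr /nsq big1 ?add0r // => i _; rewrite mxE normr0 expr0n.
split; last split.
- case: (eqVneq c2 0) => Hc2z.
  + have Hnu : nu = 0 by rewrite /nu Hc2z mul0r.
    have HUz : c1 *: (U *m z) = beta *: e1 C k.+1.
      by rewrite -Hz /T Hc2z scale0r addr0 scalemxAl.
    have Hc1n : c1 != 0.
      apply/eqP => E; move: HUz; rewrite E scale0r => /matrixP/(_ ord0 ord0).
      rewrite !mxE eqxx mulr1 => /esym/eqP; by rewrite (negbTE Hbeta).
    have -> : xt = c1^-1 *: b.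
      rewrite /xt /coef Hnu !mul0r scale0r subr0 /x -mulmxA.
      have -> : U *m z = (c1^-1 * beta) *: e1 C k.+1.
        by rewrite -scalerA -HUz scalerA mulVf ?scale1r //.
      by rewrite -scalemxAr Qk_e1 uq1 scalerA -mulrA mulfV ?mulr1.
    apply/krylov_kry; exists (fun m => (m == 0)%:R * c1^-1).
    rewrite big_ord_recl /= mul1r big1 ?addr0 // => i _.
    by rewrite mul0r scale0r.
  + rewrite Hxt; apply/krylov_kry.
    have Hs : inspan V b k.+1 (Q *m (U *m astar)).
      rewrite Qk_mul; apply: inspan_sum => i _; apply: inspanZ; apply: inspan_q.
      exact: ltn_ord.
    have [a Ha] := span_kry c1 Hb Hc2z HL (leqnSn _) Hs.
    by exists a.
- move=> y /Hspan [a ->]; rewrite !norm2E ler_sqrtC ?nnegrE ?nsq_ge0 //.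
  by rewrite Hxr Fres lerDr nsq_ge0.
- move=> y /Hspan [a ->]; rewrite !norm2E ler_sqrtC ?nnegrE ?nsq_ge0 //.
  rewrite Hxr Fres gerDr => H.
  have H0 : nsq (top g - R *m a) = 0 by apply/eqP; rewrite eq_le H nsq_ge0.
  have /eqP := nsq_eq0 H0; rewrite subr_eq0 -HRa => /eqP E.
  have -> : a = astar by rewrite -(mulKmx HRu a) -E mulKmx.
  by rewrite Hxt.
Qed.
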